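(* Let $V$ be a $\mathcal{T}$-module such that the restriction of $V$ to $\mathcal{U}(\mathfrak{h})$, where $\mathfrak{h}=\mathbb{C}L_0\oplus\mathbb{C}G_0$, is free of rank $1$. Then there exist $\lambda\in\mathbb{C}^*$ and $\alpha\in\mathbb{C}$ such that $V$ or $\Pi(V)$ is isomorphic to $\mathcal{M}_1(\lambda,\alpha)$ or to $\mathcal{M}_{-1}(\lambda,\alpha)$.
   Context: The twisted $N=2$ superconformal algebra $\mathcal{T}$ is the Lie superalgebra over $\mathbb{C}$ with basis $\{L_m, I_r, G_p\mid m\in\mathbb{Z}, r\in\frac12+\mathbb{Z}, p\in\frac12\mathbb{Z}\}$, even part spanned by the $L_m,I_r$, odd part by the $G_p$, only nonzero brackets $[L_m,L_n]=(m-n)L_{m+n}$, $[L_m,I_r]=-rI_{m+r}$, $[L_m,G_p]=(\frac m2-p)G_{m+p}$, $[I_r,G_p]=G_{r+p}$, $[G_p,G_q]=(-1)^{2p}2L_{p+q}$ if $p+q\in\mathbb{Z}$, $[G_p,G_q]=(-1)^{2p+1}(p-q)I_{p+q}$ if $p+q\in\frac12+\mathbb{Z}$. Modules are $\mathbb{Z}_2$-graded; $\Pi$ is the parity-change functor. For $p\in\frac12\mathbb{Z}$, $\lambda^p$ means $(\lambda^{1/2})^{2p}$ for a fixed square root. For $\lambda\in\mathbb{C}^*,\alpha\in\mathbb{C},t=\pm1$, $\mathcal{M}_t(\lambda,\alpha)$ is the space $\mathbb{C}[\partial^2]\oplus\partial\mathbb{C}[\partial^2]$ ($\partial$ a formal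 variable; even part $\mathbb{C}[\partial^2]$, odd part $\partial\mathbb{C}[\partial^2]$) with action ($m\in\mathbb{Z}$, $r\in\frac12+\mathbb{Z}$, $p\in\frac12\mathbb{Z}$): $L_mf(\partial^2)=\lambda^m(\partial^2+m\alpha)f(\partial^2+m)$, $L_m\partial f(\partial^2)=\lambda^m(\partial^2+m(\alpha+\frac12))\partial f(\partial^2+m)$, $I_rf(\partial^2)=-2t^{2r}\lambda^{r}\alpha f(\partial^2+r)$, $I_r\partial f(\partial^2)=t^{2r}\lambda^{r}(1-2\alpha)\partial f(\partial^2+r)$, $G_pf(\partial^2)=t^{2p}\lambda^p\partial f(\partial^2+p)$, $G_p\partial f(\partial^2)=(-t)^{2p}\lambda^p(\partial^2+2p\alpha)f(\partial^2+p)$. *)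

(* Defs.v *)
From HB Require Import structures.
From mathcomp Require Import all_boot all_order all_algebra.
From mathcomp Require Import reals complex.
Set Implicit Arguments. Unset Strict Implicit. Unset Printing Implicit Defensive.
Import Order.TTheory GRing.Theory Num.Theory.
Local Open Scope ring_scope.

(* Index encoding:
   L_m    <-> L m          (m : int)
   I_r    <-> I k          with r = k + 1/2   (k : int)
   G_p    <-> G j          with p = j / 2     (j : int)
   A module V = V0 (+) V1 (even/odd part) is given by the restrictions of the
   operators to each homogeneous component: L,I preserve parity, G swaps it. *)

Section Rels.
Variable F : fieldType.

(* All bracket relations of T, applied to vectors of the component U
   (U = V0 or V1, W = the other component).  Supercommutators:
   [even,even], [even,odd] are commutators, [odd,odd] anticommutators. *)
Definition side_rels (U W : lmodType F)
  (L : int -> {linear U -> U}) (L' : int -> {linear W -> W})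
  (I : int -> {linear U -> U}) (I' : int -> {linear W -> W})
  (G : int -> {linear U -> W}) (G' : int -> {linear W -> U}) : Prop :=
  (
      forall (m n : int) (x : U),
        L m (L n x) - L n (L m x) = (m - n)%:~R *: L (m + n) x) /\ (
      (* [L_m, I_r] = -r I_{m+r},  r = k + 1/2 *)
      forall (m k : int) (x : U),
        L m (I k (x)) - I k (L m x) = - ((2 * k + 1)%:~R / 2) *: I (m + k) x) /\ (
      (* [L_m, G_p] = (m/2 - p) G_{m+p},  p = j/2 *)
      forall (m j : int) (x : U),
        L' m (G j x) - G j (L m x) = ((m - j)%:~R / 2) *: G (2 * m + j) x) /\ (
      forall (k l : int) (x : U), I k (I l x) = I l (I k x)) /\ (
      (* [I_r, G_p] = G_{r+p} *)
      forall (k j : int) (x : U),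
        I' k (G j x) - G j (I k x) = G (2 * k + 1 + j) x) /\ (
      (* [G_p, G_q] = (-1)^{2p} 2 L_{p+q}  if p+q in Z *)
      forall (j l n : int) (x : U), j + l = 2 * n ->
        G' j (G l x) + G' l (G j x) = ((-1) ^ j * 2) *: L n x) /\ (
      (* [G_p, G_q] = (-1)^{2p+1} (p-q) I_{p+q}  if p+q in 1/2+Z *)
      forall (j l k : int) (x : U), j + l = 2 * k + 1 ->
        G' j (G l x) + G' l (G j x) = ((-1) ^ (j + 1) * ((j - l)%:~R / 2)) *: I k x).

Record tmodule := TModule {
  tV0 : lmodType F;
  tV1 : lmodType F;
  tL0 : int -> {linear tV0 -> tV0};
  tL1 : int -> {linear tV1 -> tV1};
  tI0 : int -> {linear tV0 -> tV0};
  tI1 : int -> {linear tV1 -> tV1};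
  tG01 : int -> {linear tV0 -> tV1};
  tG10 : int -> {linear tV1 -> tV0};
  trels0 : side_rels tL0 tL1 tI0 tI1 tG01 tG10;
  trels1 : side_rels tL1 tL0 tI1 tI0 tG10 tG01 }.

Definition Pi (V : tmodule) : tmodule :=
  @TModule (tV1 V) (tV0 V) (tL1 V) (tL0 V) (tI1 V) (tI0 V) (tG10 V) (tG01 V)
    (trels1 V) (trels0 V).

Definition polyact (U : lmodType F) (f : U -> U) (p : {poly F}) (v : U) : U :=
  \sum_(i < size p) p`_i *: iter i f v.

(* U(h), h = C L_0 + C G_0, has basis L_0^n, G_0 L_0^n (n >= 0).
   V is U(h)-free of rank 1 with an even generator v: the vectors L_0^n v
   form a basis of V0 and the vectors G_0 L_0^n v form a basis of V1. *)
Definition Uh_free1_even (V : tmodule) : Prop :=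
  exists v : tV0 V,
    bijective (fun p : {poly F} => polyact (tL0 V 0) p v) /\
    bijective (fun p : {poly F} => tG01 V 0 (polyact (tL0 V 0) p v)).

(* Free of rank 1 (generator homogeneous, even or odd). *)
Definition Uh_free1 (V : tmodule) : Prop := Uh_free1_even V \/ Uh_free1_even (Pi V).

End Rels.

Section Mt.
Variable C : numClosedFieldType.

(* lambda^p := (lambda^{1/2})^{2p}, with the fixed square root sqrtC; k = 2p. *)
Definition lpow (lam : C) (k : int) : C := (sqrtC lam) ^ k.
Definition half (k : int) : C := k%:~R / 2.
Definition shift (f : {poly C}) (c : C) : {poly C} := f \Po ('X + c%:P).

(* M_t(lambda, alpha): even part C[d^2] ~ {poly C} (f <-> f(d^2)),
   odd part d C[d^2] ~ {poly C} (f <-> d f(d^2)). *)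
Definition ML0 (lam al : C) (m : int) (f : {poly C}) : {poly C} :=
  lpow lam (2 * m) *: (('X + (m%:~R * al)%:P) * shift f m%:~R).
Definition ML1 (lam al : C) (m : int) (f : {poly C}) : {poly C} :=
  lpow lam (2 * m) *: (('X + (m%:~R * (al + 2^-1))%:P) * shift f m%:~R).
Definition MI0 (t lam al : C) (k : int) (f : {poly C}) : {poly C} :=
  (- 2 * t ^ (2 * k + 1) * lpow lam (2 * k + 1) * al) *: shift f (half (2 * k + 1)).
Definition MI1 (t lam al : C) (k : int) (f : {poly C}) : {poly C} :=
  (t ^ (2 * k + 1) * lpow lam (2 * k + 1) * (1 - 2 * al)) *: shift f (half (2 * k + 1)).
Definition MG01 (t lam : C) (j : int) (f : {poly C}) : {poly C} :=
  (t ^ j * lpow lam j) *: shift f (half j).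
Definition MG10 (t lam al : C) (j : int) (f : {poly C}) : {poly C} :=
  ((- t) ^ j * lpow lam j) *: (('X + (j%:~R * al)%:P) * shift f (half j)).

Definition iso_Mt (V : tmodule C) (t lam al : C) : Prop :=
  exists (f0 : {linear tV0 V -> {poly C}}) (f1 : {linear tV1 V -> {poly C}}),
    [/\ bijective f0, bijective f1,
        forall m x, f0 (tL0 V m x) = ML0 lam al m (f0 x),
        forall m x, f1 (tL1 V m x) = ML1 lam al m (f1 x) &
      [/\ forall k x, f0 (tI0 V k x) = MI0 t lam al k (f0 x),
        forall k x, f1 (tI1 V k x) = MI1 t lam al k (f1 x),
        forall j x, f1 (tG01 V j x) = MG01 t lam j (f0 x) &
        forall j x, f0 (tG10 V j x) = MG10 t lam al j (f1 x)]].

End Mt.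

(* Main.v *)
Require Import Defs.
From HB Require Import structures.
From mathcomp Require Import all_boot all_order all_algebra.
From mathcomp Require Import reals complex.
From mathcomp Require Import ring lra zify.
Import Order.TTheory GRing.Theory Num.Theory.
Set Implicit Arguments. Unset Strict Implicit. Unset Printing Implicit Defensive.
Local Open Scope ring_scope.

Section PolyBasics.
Variable C : numClosedFieldType.
Implicit Types (p q : {poly C}) (a b c d s : C).

Lemma shiftM p q s : shift (p * q) s = shift p s * shift q s.
Proof. by rewrite /shift comp_polyM. Qed.
Lemma shiftD p q s : shift (p + q) s = shift p s + shift q s.
Proof. by rewrite /shift comp_polyD. Qed.
Lemma shiftB p q s : shift (p - q) s = shift p s - shift q s.
Proof. by rewrite /shift comp_polyB. Qed.
Lemma shiftZ a p s : shift (a *: p) s = a *: shift p s.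
Proof. by rewrite /shift comp_polyZ. Qed.
Lemma shiftC a s : shift a%:P s = a%:P.
Proof. by rewrite /shift comp_polyC. Qed.
Lemma shift1 s : shift 1 s = 1.
Proof. by rewrite -polyC1 shiftC. Qed.
Lemma shiftX s : shift 'X s = 'X + s%:P.
Proof. by rewrite /shift comp_polyX. Qed.
Lemma shift0 p : shift p 0 = p.
Proof. by rewrite /shift addr0 comp_polyXr. Qed.
Lemma shift_shift p a b : shift (shift p a) b = shift p (a + b).
Proof.
rewrite /shift -comp_polyA comp_polyD comp_polyX comp_polyC.
by rewrite rmorphD; congr (_ \Po _); ring.
Qed.
Lemma size_shift p s : size (shift p s) = size p.
Proof. by rewrite /shift size_comp_poly2 // size_XaddC. Qed.
Lemma horner_shift p s x : (shift p s).[x] = p.[x + s].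
Proof. by rewrite /shift horner_comp !hornerE. Qed.

Lemma periodic p d c : d != 0 -> shift p d - p = c%:P ->
  p = (c / d) *: 'X + (p.[0])%:P.
Proof.
move=> d0 H.
set q := p - ((c / d) *: 'X + (p.[0])%:P).
have Hq : shift q d = q.
  apply/eqP; rewrite -subr_eq0; apply/eqP.
  rewrite /q shiftB shiftD shiftZ shiftX shiftC.
  have -> : shift p d = p + c%:P by rewrite -H; ring.
  rewrite scalerDr -!mul_polyC -rmorphM mulfVK //. ring.
have q0 : q.[0] = 0 by rewrite /q !hornerE; ring.
have qn : forall n : nat, q.[n%:R * d] = 0.
  elim=> [|n IH]; first by rewrite mul0r.
  by rewrite mulrSr mulrDl mul1r -horner_shift Hq IH.
apply/eqP; rewrite -subr_eq0; apply/eqP; rewrite -/q.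
apply/eqP; apply/negPn/negP => qnz.
set rs := [seq (i%:R * d) | i <- iota 0 (size q)].
have H1 : all (root q) rs.
  by apply/allP => x /mapP [i _ ->]; rewrite /root qn.
have H2 : uniq rs.
  rewrite map_inj_uniq ?iota_uniq // => i j /(mulIf d0) /eqP.
  by rewrite eqr_nat => /eqP.
have := max_poly_roots qnz H1 H2.
by rewrite size_map size_iota ltnn.
Qed.

Lemma size_prod_lin p q k c : k != 0 -> p * q = k *: 'X + c%:P ->
  (size p <= 2)%N /\ (size q <= 2)%N.
Proof.
move=> k0 H.
have sz : size (p * q) = 2%N.
  rewrite H -mul_polyC size_MXaddC. 
  by rewrite polyC_eq0 (negbTE k0) /= size_polyC k0.
have p0 : p != 0 by apply/eqP => p0; move: sz; rewrite p0 mul0r size_poly0.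
have q0 : q != 0 by apply/eqP => q0; move: sz; rewrite q0 mulr0 size_poly0.
move: sz; rewrite size_mul //.
have a : (0 < size p)%N by rewrite size_poly_gt0.
have b : (0 < size q)%N by rewrite size_poly_gt0.
move=> e; have e3 : (size p + size q = 3)%N by move: e; case: (_ + _)%N => //= n ->.
split; lia.
Qed.

Definition Q a b c : {poly C} := a *: 'X^2 + b *: 'X + c%:P.

Lemma Q_inj a b c a' b' c' : Q a b c = Q a' b' c' -> [/\ a = a', b = b' & c = c'].
Proof.
move=> H.
have e i := congr1 (fun p => p`_i) H.
move: (e 0%N) (e 1%N) (e 2%N); rewrite /Q !coefE /= .
move=> e0 e1 e2; split.
- by move: e2; rewrite !mulr1 !mulr0 !addr0.
- by move: e1; rewrite !mulr1 !mulr0 !addr0 !add0r.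
- by move: e0; rewrite !mulr0 !add0r.
Qed.

Lemma QD a b c a' b' c' : Q a b c + Q a' b' c' = Q (a + a') (b + b') (c + c').
Proof. rewrite /Q !scalerDl rmorphD; ring. Qed.
Lemma QB a b c a' b' c' : Q a b c - Q a' b' c' = Q (a - a') (b - b') (c - c').
Proof. rewrite /Q !scalerBl rmorphB; ring. Qed.
Lemma QZ k a b c : k *: Q a b c = Q (k * a) (k * b) (k * c).
Proof. rewrite /Q !scalerDr !scalerA -!mul_polyC rmorphM; ring. Qed.
Lemma QX : 'X = Q 0 1 0 :> {poly C}.
Proof. by rewrite /Q scale0r scale1r add0r addr0. Qed.
Lemma QC a : a%:P = Q 0 0 a.
Proof. by rewrite /Q !scale0r !add0r. Qed.
Lemma Q1 : 1 = Q 0 0 1.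
Proof. by rewrite -QC. Qed.
Lemma QM0 a b c d : Q 0 a b * Q 0 c d = Q (a * c) (a * d + b * c) (b * d).
Proof. rewrite /Q !scale0r !add0r -!mul_polyC !rmorphD !rmorphM; ring. Qed.
Lemma QXM a b : 'X * Q 0 a b = Q a b 0.
Proof. rewrite /Q !scale0r !add0r -!mul_polyC; ring. Qed.
Lemma QMX a b : Q 0 a b * 'X = Q a b 0.
Proof. by rewrite mulrC QXM. Qed.
Lemma shiftQ0 a b s : shift (Q 0 a b) s = Q 0 a (a * s + b).
Proof.
rewrite /Q !scale0r !add0r shiftD shiftZ shiftX shiftC -!mul_polyC.
rewrite rmorphD rmorphM; ring.
Qed.

Lemma size2E p : (size p <= 2)%N -> p = Q 0 p`_1 p`_0.
Proof.
move=> sp; apply/polyP => i; rewrite /Q !coefE.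
case: i => [|[|i]] /=; try ring.
rewrite nth_default; last by apply: leq_trans sp _.
ring.
Qed.

End PolyBasics.

Section Step1.
Variable C : numClosedFieldType.
Implicit Types (p q : {poly C}) (a b c d s : C).

Lemma step1 (A B A' B' : {poly C}) s e : s != 0 ->
  shift A s * B + shift A' (-s) * B' = (e * 2) *: 'X ->
  shift B' s * A' + shift B (-s) * A = (e * 2) *: 'X ->
  exists c, shift A s * B = e *: 'X + c%:P.
Proof.
move=> s0 hv hw.
set P := shift A s * B.
have hQ : shift A' (-s) * B' = (e * 2) *: 'X - P by rewrite -hv [P + _]addrC addrK.
have e1 : shift (shift A' (-s) * B') s = A' * shift B' s.
  by rewrite shiftM shift_shift addNr shift0.
have e2 : shift P (-s) = A * shift B (-s).
  by rewrite /P shiftM shift_shift addrN shift0.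
have hR : shift (shift P (-s)) (2 * s) - shift P (-s) = (e * 2 * s)%:P.
  rewrite shift_shift.
  have -> : - s + 2 * s = s by ring.
  have hw' : shift (shift A' (-s) * B') s + shift P (-s) = (e * 2) *: 'X.
    by rewrite e1 e2 [A' * _]mulrC [A * _]mulrC.
  move: hw'; rewrite hQ shiftB shiftZ shiftX => hw'.
  have -> : shift P s = (e * 2) *: ('X + s%:P) - (e * 2) *: 'X + shift P (-s).
    by rewrite -hw'; ring.
  rewrite scalerDr -!mul_polyC !rmorphM; ring.
have s2 : 2 * s != 0 by rewrite mulf_neq0 // pnatr_eq0.
have := periodic s2 hR.
set r := (shift P (- s)).[0] => hP.
exists (e * s + r).
have -> : P = shift (shift P (-s)) s by rewrite shift_shift addNr shift0.
rewrite hP shiftD shiftZ shiftX shiftC.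
have -> : e * 2 * s / (2 * s) = e by rewrite -[e * 2 * s]mulrA mulfK.
rewrite scalerDr -!mul_polyC !rmorphD !rmorphM; ring.
Qed.

End Step1.

Section Aux.
Variable C : numClosedFieldType.

Lemma halfN (j : int) : Defs.half C (- j) = - Defs.half C j.
Proof. by rewrite /Defs.half intrN mulNr. Qed.
Lemma half2 (j : int) : Defs.half C (2 * j) = j%:~R.
Proof. by rewrite /Defs.half intrM; field. Qed.
Lemma half0 : Defs.half C 0 = 0.
Proof. by rewrite /Defs.half mul0r. Qed.

Lemma eps_neq0 (j : int) : (-1 : C) ^ j != 0.
Proof. by rewrite expfz_neq0 // oppr_eq0 oner_eq0. Qed.
Lemma epsS (j : int) : (-1 : C) ^ (1 + j) = - (-1) ^ j.
Proof. by rewrite expfzDr ?oppr_eq0 ?oner_eq0 // expr1z mulN1r. Qed.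
Lemma eps2 (k : int) : (-1 : C) ^ (2 * k) = 1.
Proof. have e : (-1 : C) ^ (2%:Z) = 1 by rewrite -exprnP sqrrN expr1n. by rewrite -exprz_exp e exp1rz. Qed.
Lemma eps_odd (k : int) : (-1 : C) ^ (1 + 2 * k) = -1.
Proof. by rewrite epsS eps2. Qed.


Lemma int_ind2 (P : int -> Prop) : P 0 ->
  (forall j, P j -> P (1 + j)) -> (forall j, P (1 + j) -> P j) -> forall j, P j.
Proof.
move=> P0 Hu Hd; elim/int_rec => [|n IH|n IH] //.
- by rewrite intS; apply: Hu.
- apply: Hd; have -> : 1 + - (n.+1)%:Z = - (n%:Z) by rewrite intS; ring.
  exact: IH.
Qed.

Lemma int_parity (j : int) : exists k, j = 2 * k \/ j = 1 + 2 * k.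
Proof.
elim/int_ind2: j => [|j [k [->|->]]|j [k [e|e]]].
- by exists 0; left.
- by exists k; right.
- by exists (1 + k); left; ring.
- by exists (k - 1); right; rewrite -[j](addKr 1) e; ring.
- by exists k; left; rewrite -[j](addKr 1) e; ring.
Qed.

Lemma lc1 (a b L R k1 : C) : a = b ->
  L - R = k1 * (a - b) -> L = R.
Proof. move=> ->; rewrite subrr mulr0 => /eqP; rewrite subr_eq0 => /eqP //. Qed.
Lemma lc2 (a b c d L R k1 k2 : C) : a = b -> c = d ->
  L - R = k1 * (a - b) + k2 * (c - d) -> L = R.
Proof. move=> -> ->; rewrite !subrr !mulr0 addr0 => /eqP; rewrite subr_eq0 => /eqP //. Qed.
Lemma lc3 (a b c d e f L R k1 k2 k3 : C) : a = b -> c = d -> e = f ->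
  L - R = k1 * (a - b) + k2 * (c - d) + k3 * (e - f) -> L = R.
Proof. move=> -> -> ->; rewrite !subrr !mulr0 !addr0 => /eqP; rewrite subr_eq0 => /eqP //. Qed.

End Aux.

Ltac toQ Hg Hh := rewrite /= ?Hg ?Hh ?QX ?Q1 ?QC ?(shiftQ0, QM0, QZ, QD, QB).

Section Main.
Variable C : numClosedFieldType.
Variables (g h : int -> {poly C}) (c0 e0 : {poly C}).
Local Notation hf := (Defs.half C).
Local Notation eps j := ((-1 : C) ^ (j : int)).
Hypothesis H0g : g 0 = 1.
Hypothesis H0h : h 0 = 'X.
Hypothesis Hvm : forall j, shift (g (-j)) (hf j) * h j + shift (g j) (hf (-j)) * h (-j)
   = (eps j * 2) *: 'X.
Hypothesis Hwm : forall j, shift (h (-j)) (hf j) * g j + shift (h j) (hf (-j)) * g (-j)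
   = (eps j * 2) *: 'X.
Hypothesis Hjv : forall j, 2 *: (shift (g j) (hf j) * h j) = eps j *: (g (2 * j) * 'X + h (2 * j)).
Hypothesis Hjw : forall j, 2 *: (shift (h j) (hf j) * g j)
   = eps j *: (h (2 * j) + shift 'X (hf (2 * j)) * g (2 * j)).
Hypothesis H2j : forall k, let j := 1 + 2 * k in
  shift (g (-j)) (hf (2 * j)) * h (2 * j) + shift (g (2 * j)) (hf (-j)) * h (-j)
   = (-3) *: (g j * 'X + h j).
Hypothesis HIv : forall j, shift (g j) (hf 1) * e0 - shift c0 (hf j) * g j = g (1 + j).
Hypothesis HIw : forall j, shift (h j) (hf 1) * c0 - shift e0 (hf j) * h j = h (1 + j).
Hypothesis Hc : hf 1 *: c0 = g 1 * 'X + h 1.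
Hypothesis He : hf 1 *: e0 = h 1 + shift 'X (hf 1) * g 1.

Lemma SP j : exists c, shift (g (-j)) (hf j) * h j = eps j *: 'X + c%:P.
Proof.
have [->|j0] := eqVneq j 0.
  exists 0; rewrite oppr0 H0g H0h shift1 mul1r expr0z scale1r; ring.
apply: step1.
- by rewrite /Defs.half mulf_neq0 // ?intr_eq0 // invr_eq0 pnatr_eq0.
- by rewrite -halfN; apply: Hvm.
- by rewrite -halfN; apply: Hwm.
Qed.

Lemma sizes j : (size (g j) <= 2)%N /\ (size (h j) <= 2)%N.
Proof.
have [c Hc1] := SP j.
have [c' Hc2] := SP (- j).
have [_ sh] := size_prod_lin (eps_neq0 C j) Hc1.
have [sg _] := size_prod_lin (eps_neq0 C (-j)) Hc2.
by move: sg; rewrite opprK size_shift.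
Qed.

Theorem poly_main : exists (gam al : C), gam != 0 /\ forall j,
  g j = (gam ^ j)%:P /\ h j = (eps j * gam ^ j) *: ('X + (j%:~R * al)%:P).
Proof.
have [gA [gB Hg]] : exists gA gB : int -> C, forall j, g j = Q 0 (gA j) (gB j).
  exists (fun j => (g j)`_1), (fun j => (g j)`_0) => j.
  by have [s _] := sizes j; apply: size2E.
have [hA [hB Hh]] : exists hA hB : int -> C, forall j, h j = Q 0 (hA j) (hB j).
  exists (fun j => (h j)`_1), (fun j => (h j)`_0) => j.
  by have [_ s] := sizes j; apply: size2E.
have S j : gA (- j) * hA j = 0 /\ 
           gA (-j) * hB j + (gA (-j) * hf j + gB (-j)) * hA j = eps j.
  have [c E] := SP j.
  move: E; rewrite !Hg !Hh !QX !QC ?(shiftQ0, QM0, QZ, QD, QB).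
  case/Q_inj => e1 e2 e3; split.
    by rewrite e1; ring.
  by rewrite e2; ring.
have [gA0 gB0] : gA 0 = 0 /\ gB 0 = 1.
  by move: H0g; rewrite Hg Q1; case/Q_inj.
have [hA0 hB0] : hA 0 = 1 /\ hB 0 = 0.
  by move: H0h; rewrite Hh QX; case/Q_inj.
have gAe i : gA (2 * i) = 0.
  have [->|i0] := eqVneq i 0; first by rewrite mulr0.
  move: (Hjv i) (Hjw i); toQ Hg Hh.
  move=> /Q_inj [V2 V1 V0] /Q_inj [W2 W1 W0].
  have : (-1) ^ i * i%:~R * gA (2 * i) = 0.
    apply: (lc2 V1 W1 (k1 := 1) (k2 := -1)).
    by rewrite half2 /Defs.half; field.
  move/eqP; rewrite !mulf_eq0 (negbTE (eps_neq0 _ _)) intr_eq0 (negbTE i0) /=.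
  by move/eqP.
have gAo k : gA (1 + 2 * k) = 0.
  have ej : eps (1 + 2 * k) = -1 by apply: eps_odd.
  have j0 : (1 + 2 * k)%:~R != 0 :> C by rewrite intr_eq0; lia.
  move: (Hjv (1 + 2 * k)) (Hjw (1 + 2 * k)) (H2j k); toQ Hg Hh.
  move=> /Q_inj [V2 V1 V0] /Q_inj [W2 W1 W0] /Q_inj [T2 T1 T0].
  rewrite !gAe ej in V2 V1 V0 W2 W1 W0 T2.
  have [z|nz] := eqVneq (hA (1 + 2 * k)) 0; last first.
    have : gA (1 + 2 * k) * hA (1 + 2 * k) = 0.
      by apply: (lc1 V2 (k1 := 1/2)); field.
    by move/eqP; rewrite mulf_eq0 (negbTE nz) orbF => /eqP.
  have [_ s2] := S (1 + 2 * k).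
  rewrite z ej in s2.
  have e1 : gA (- (1 + 2 * k)) * hB (1 + 2 * k) = -1 by rewrite -s2; ring.
  rewrite z in V1 V0 W0.
  have e2 : gB (2 * (1 + 2 * k)) = gA (1 + 2 * k) * hB (1 + 2 * k).
    have : (1 + 2 * k)%:~R * (gB (2 * (1 + 2 * k)) - gA (1 + 2 * k) * hB (1 + 2 * k)) = 0.
      by apply: (lc2 W0 V0 (k1 := 1) (k2 := -1)); rewrite half2 /Defs.half; field.
    by move/eqP; rewrite mulf_eq0 (negbTE j0) /= subr_eq0 => /eqP.
  have e3 : hA (2 * (1 + 2 * k)) = -3 * gA (1 + 2 * k) * hB (1 + 2 * k).
    by apply: (lc2 V1 e2 (k1 := 1) (k2 := -1)); rewrite /Defs.half; field.
  have : 6 * gA (1 + 2 * k) = 0.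
    apply: (lc3 T2 e3 e1 (k1 := 1) (k2 := - gA (- (1 + 2 * k))) (k3 := 3 * gA (1 + 2 * k))).
    by rewrite /Defs.half; field.
  by move/eqP; rewrite mulf_eq0 pnatr_eq0 /= => /eqP.
have gAall j : gA j = 0.
  by have [k [->|->]] := int_parity j; [apply: gAe | apply: gAo].
have S2 j : gB (- j) * hA j = eps j.
  by have [_ <-] := S j; rewrite !gAall; ring.
have h12 : 2 * hf 1 = 1 by rewrite /Defs.half; field.
have Ec : c0 = Q 0 (2 * (gB 1 + hA 1)) (2 * hB 1).
  have -> : c0 = 2 *: (hf 1 *: c0) by rewrite scalerA h12 scale1r.
  by rewrite Hc; toQ Hg Hh; rewrite !gAall; congr Q; ring.
have Ee : e0 = Q 0 (2 * (hA 1 + gB 1)) (2 * hB 1 + gB 1).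
  have -> : e0 = 2 *: (hf 1 *: e0) by rewrite scalerA h12 scale1r.
  by rewrite He; toQ Hg Hh; rewrite !gAall; congr Q; rewrite /Defs.half; field.
have HI j := HIv j.
have HJ j := HIw j.
have I0 j : gB j * (2 * hB 1 + gB 1) - (2 * (gB 1 + hA 1) * hf j + 2 * hB 1) * gB j
    = gB (1 + j).
  by move: (HIv j); rewrite Ec Ee; toQ Hg Hh; rewrite ?gAall; case/Q_inj => _ _ <-; ring.
have J0 j : (hA j * hf 1 + hB j) * (2 * hB 1) -
    (2 * (hA 1 + gB 1) * hf j + (2 * hB 1 + gB 1)) * hB j = hB (1 + j).
  by move: (HIw j); rewrite Ec Ee; toQ Hg Hh; rewrite ?gAall; case/Q_inj => _ _ <-; ring.
have Im1 := I0 (-1); rewrite addrN gB0 in Im1.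
have S21 := S2 1; rewrite expr1z in S21.
have u : gB (-1) * gB 1 = 1.
  apply: (lc2 Im1 S21 (k1 := 1/2) (k2 := -1/2)).
  by rewrite halfN /Defs.half; field.
have hA1 : hA 1 = - gB 1.
  apply: (lc2 S21 u (k1 := gB 1) (k2 := - hA 1)); ring.
set gam := gB 1 in u hA1 I0 J0 *.
have gam0 : gam != 0 by apply/eqP => g0; move: u; rewrite g0 mulr0 => /eqP; rewrite eq_sym oner_eq0.
have mult j : gB (1 + j) = gam * gB j.
  by rewrite -I0 hA1; ring.
have gBj j : gB j = gam ^ j.
  elim/int_ind2: j => [|j IH|j IH]; first by rewrite gB0 expr0z.
    by rewrite mult IH expfzDr // expr1z.
  move: IH; rewrite mult expfzDr // expr1z => /(mulfI gam0).
  done.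
have hAj j : hA j = eps j * gam ^ j.
  have := S2 j; rewrite gBj => e.
  have ee : gam ^ j * gam ^ (- j) = 1 by rewrite -expfzDr // addrN expr0z.
  by rewrite -[hA j]mul1r -{1}ee -mulrA e; ring.
set al := - hB 1 / gam.
have hB1 : hB 1 = - gam * al by rewrite /al; field.
have rec j : hB (1 + j) = hA j * hB 1 - gam * hB j.
  by rewrite -J0 hA1 /Defs.half; field.
have hBj j : hB j = eps j * gam ^ j * (j%:~R * al).
  elim/int_ind2: j => [|j IH|j IH]; first by rewrite hB0; ring.
    by rewrite rec IH hAj hB1 epsS expfzDr // expr1z intrD; ring.
  move: IH; rewrite rec hAj hB1 epsS expfzDr // expr1z intrD => e.
  apply: (mulfI gam0).
  apply: (lc1 e (k1 := -1)); ring.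
exists gam, al; split => // j; split.
  by rewrite Hg gAall gBj /Q !scale0r !add0r.
rewrite Hh hAj hBj /Q scale0r add0r scalerDr -!mul_polyC !rmorphM; ring.
Qed.


End Main.

Section PolyAct.
Variable C : numClosedFieldType.
Variable U : lmodType C.
Variable f : {linear U -> U}.
Implicit Types (p q : {poly C}) (u : U).

Lemma iterD i u u' : iter i f (u + u') = iter i f u + iter i f u'.
Proof. by elim: i => //= i ->; rewrite linearD. Qed.
Lemma iterZ i a u : iter i f (a *: u) = a *: iter i f u.
Proof. by elim: i => //= i ->; rewrite linearZ. Qed.
Lemma iter0 i : iter i f 0 = 0.
Proof. by elim: i => //= i ->; rewrite linear0. Qed.

Lemma paE {n p u} : (size p <= n)%N -> polyact f p u = \sum_(i < n) p`_i *: iter i f u.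
Proof.
move=> sp; rewrite /polyact (big_ord_widen n (fun i => p`_i *: iter i f u) sp).
rewrite big_mkcond; apply: eq_bigr => i _.
case: ifP => // /negbT; rewrite -leqNgt => H.
by rewrite nth_default // scale0r.
Qed.

Lemma paD p q u : polyact f (p + q) u = polyact f p u + polyact f q u.
Proof.
set n := maxn (size p) (size q).
have hp : (size p <= n)%N by rewrite leq_maxl.
have hq : (size q <= n)%N by rewrite leq_maxr.
have hpq : (size (p + q)%R <= n)%N := @leq_trans _ _ _ (size_polyD p q) (leqnn n).
rewrite (paE hp) (paE hq) (paE hpq) -big_split /=.
by apply: eq_bigr => i _; rewrite coefD scalerDl.
Qed.

Lemma paZ a p u : polyact f (a *: p) u = a *: polyact f p u.
Proof.
have hp : (size (a *: p)%R <= size p)%N by apply: size_scale_leq.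
rewrite (paE hp) (paE (leqnn _)) scaler_sumr.
by apply: eq_bigr => i _; rewrite coefZ scalerA.
Qed.

Lemma pa0 u : polyact f 0 u = 0.
Proof.
have h : (size (0 : {poly C})%R <= 0)%N by rewrite size_poly0.
by rewrite (paE h) big_ord0.
Qed.

Lemma paN p u : polyact f (- p) u = - polyact f p u.
Proof. by rewrite -[(- p)]scaleN1r paZ scaleN1r. Qed.
Lemma paB p q u : polyact f (p - q) u = polyact f p u - polyact f q u.
Proof. by rewrite paD paN. Qed.

Lemma paDu p u u' : polyact f p (u + u') = polyact f p u + polyact f p u'.
Proof.
rewrite /polyact -big_split /=; apply: eq_bigr => i _.
by rewrite iterD scalerDr.
Qed.

Lemma paZu p a u : polyact f p (a *: u) = a *: polyact f p u.
Proof.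
rewrite /polyact scaler_sumr; apply: eq_bigr => i _.
by rewrite iterZ !scalerA mulrC.
Qed.

Lemma paC a u : polyact f a%:P u = a *: u.
Proof.
have hp : (size a%:P <= 1)%N by apply: size_polyC_leq1.
by rewrite (paE hp) big_ord1 coefC.
Qed.

Lemma pa1 u : polyact f 1 u = u.
Proof. by rewrite -polyC1 paC scale1r. Qed.

Lemma paMX p u : polyact f (p * 'X) u = polyact f p (f u).
Proof.
have hp : (size (p * 'X)%R <= (size p).+1)%N.
  have [->|p0] := eqVneq p 0; first by rewrite mul0r size_poly0.
  by rewrite size_mulX.
rewrite (paE hp) big_ord_recl coefMX /= scale0r add0r /polyact.
by apply: eq_bigr => i _; rewrite /bump leq0n add1n coefMX /= add0n -iterSr.
Qed.

Lemma paX u : polyact f 'X u = f u.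
Proof. by rewrite -['X]mul1r paMX pa1. Qed.

Lemma pa_comm p u : f (polyact f p u) = polyact f p (f u).
Proof.
rewrite /polyact linear_sum; apply: eq_bigr => i _.
by rewrite linearZ /= -iterS iterSr.
Qed.

Lemma pa_ind p a u : polyact f (p * 'X + a%:P) u = polyact f p (f u) + a *: u.
Proof. by rewrite paD paMX paC. Qed.

Lemma pa_mul p q u : polyact f (p * q) u = polyact f p (polyact f q u).
Proof.
elim/poly_ind: p u => [|p a IH] u; first by rewrite mul0r !pa0.
rewrite mulrDl mulrAC pa_ind paD mul_polyC paZ paMX IH.
by rewrite pa_comm.
Qed.

End PolyAct.

Section Transport.
Variable C : numClosedFieldType.
Variables (U W : lmodType C) (A : {linear U -> U}) (B : {linear W -> W}) (T : {linear U -> W}) (c : C).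
Hypothesis hT : forall x, T (A x) = B (T x) + c *: T x.

Lemma transport p u : T (polyact A p u) = polyact B (shift p c) (T u).
Proof.
elim/poly_ind: p u => [|p a IH] u.
  by rewrite pa0 linear0 /shift -polyC0 comp_polyC polyC0 pa0.
rewrite pa_ind linearD linearZ /= IH hT.
rewrite shiftD shiftM shiftX shiftC mulrDr [_ * c%:P]mulrC mul_polyC.
by rewrite !paD paMX paZ paC paDu paZu.
Qed.

Lemma transport2 p u0 w0 (psi : W -> {poly C}) (Hpsi : forall y, polyact B (psi y) w0 = y) :
  T (polyact A p u0) = polyact B (shift p c * psi (T u0)) w0.
Proof. by rewrite transport pa_mul Hpsi. Qed.

End Transport.

Section LinInv.
Variables (C : numClosedFieldType) (U W : lmodType C) (f : {linear U -> W}) (g : W -> U).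
Variables (fg : cancel f g) (gf : cancel g f).
Definition linv of cancel f g & cancel g f := g.
Lemma linv_lin : linear (linv fg gf).
Proof.
move=> a x y; apply: (can_inj fg); rewrite /linv.
by rewrite linearD linearZ /= !gf.
Qed.
HB.instance Definition _ := GRing.isLinear.Build C W U *:%R (linv fg gf) linv_lin.
End LinInv.

Check fun (C : numClosedFieldType) (U W : lmodType C) (f : {linear U -> W}) g (fg : cancel f g) (gf : cancel g f) => (linv fg gf : {linear W -> U}).

Section PaFun.
Variables (C : numClosedFieldType) (U : lmodType C) (f : {linear U -> U}) (u : U).
Definition pa_fun (p : {poly C}) := polyact f p u.
Lemma pa_fun_lin : linear pa_fun.
Proof. by move=> a p q; rewrite /pa_fun paD paZ. Qed.
HB.instance Definition _ := GRing.isLinear.Build C {poly C} U *:%R pa_fun pa_fun_lin.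
End PaFun.

Lemma solveL (M : zmodType) (X Y Z : M) : X - Y = Z -> Y = X - Z.
Proof. by move=> <-; rewrite opprB addrC subrK. Qed.
Lemma solveR (M : zmodType) (X Y Z : M) : X - Y = Z -> X = Y + Z.
Proof. by move=> <-; rewrite addrC subrK. Qed.

Section Mod.
Variables (C : numClosedFieldType) (V : tmodule C) (v : tV0 V).
Local Notation hf := (Defs.half C).
Local Notation L0 := (tL0 V). Local Notation L1 := (tL1 V).
Local Notation I0 := (tI0 V). Local Notation I1 := (tI1 V).
Local Notation G01 := (tG01 V). Local Notation G10 := (tG10 V).
Local Notation w := (G01 0 v).
Local Notation phi0 p := (polyact (L0 0) p v).
Local Notation phi1 p := (polyact (L1 0) p w).

Lemma cG01 j x : G01 j (L0 0 x) = L1 0 (G01 j x) + hf j *: G01 j x.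
Proof.
have [_ [_ [RLG _]]] := trels0 V.
have := RLG 0 j x; rewrite mulr0 add0r => /solveL ->.
by rewrite -scaleNr /Defs.half add0r intrN mulNr opprK.
Qed.
Lemma cG10 j x : G10 j (L1 0 x) = L0 0 (G10 j x) + hf j *: G10 j x.
Proof.
have [_ [_ [RLG _]]] := trels1 V.
have := RLG 0 j x; rewrite mulr0 add0r => /solveL ->.
by rewrite -scaleNr /Defs.half add0r intrN mulNr opprK.
Qed.
Lemma cL0 m x : L0 m (L0 0 x) = L0 0 (L0 m x) + m%:~R *: L0 m x.
Proof.
have [RLL _] := trels0 V.
by have := RLL m 0 x; rewrite ?subr0 ?addr0 => /solveR.
Qed.
Lemma cL1 m x : L1 m (L1 0 x) = L1 0 (L1 m x) + m%:~R *: L1 m x.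
Proof.
have [RLL _] := trels1 V.
by have := RLL m 0 x; rewrite ?subr0 ?addr0 => /solveR.
Qed.
Lemma cI0 k x : I0 k (L0 0 x) = L0 0 (I0 k x) + hf (2 * k + 1) *: I0 k x.
Proof.
have [_ [RLI _]] := trels0 V.
have := RLI 0 k x; rewrite add0r => /solveL ->.
by rewrite -scaleNr opprK.
Qed.
Lemma cI1 k x : I1 k (L1 0 x) = L1 0 (I1 k x) + hf (2 * k + 1) *: I1 k x.
Proof.
have [_ [RLI _]] := trels1 V.
have := RLI 0 k x; rewrite add0r => /solveL ->.
by rewrite -scaleNr opprK.
Qed.

Lemma phi1E p : G01 0 (phi0 p) = phi1 p.
Proof.
rewrite (@transport _ _ _ (L0 0) (L1 0) (G01 0) 0).
  by rewrite shift0.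
by move=> x; rewrite cG01 /Defs.half mul0r scale0r addr0.
Qed.

Variables (psi0 : tV0 V -> {poly C}) (psi1 : tV1 V -> {poly C}).
Hypothesis K0 : forall p, psi0 (phi0 p) = p.
Hypothesis K0' : forall x, phi0 (psi0 x) = x.
Hypothesis K1 : forall p, psi1 (phi1 p) = p.
Hypothesis K1' : forall y, phi1 (psi1 y) = y.

Definition g j := psi1 (G01 j v).
Definition h j := psi0 (G10 j w).
Definition a m := psi0 (L0 m v).
Definition b m := psi1 (L1 m w).
Definition ci k := psi0 (I0 k v).
Definition ei k := psi1 (I1 k w).

Lemma TG01 j p : G01 j (phi0 p) = phi1 (shift p (hf j) * g j).
Proof. by apply: transport2 => // x; apply: cG01. Qed.
Lemma TG10 j p : G10 j (phi1 p) = phi0 (shift p (hf j) * h j).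
Proof. by apply: transport2 => // x; apply: cG10. Qed.
Lemma TL0 m p : L0 m (phi0 p) = phi0 (shift p m%:~R * a m).
Proof. by apply: transport2 => // x; apply: cL0. Qed.
Lemma TL1 m p : L1 m (phi1 p) = phi1 (shift p m%:~R * b m).
Proof. by apply: transport2 => // x; apply: cL1. Qed.
Lemma TI0 k p : I0 k (phi0 p) = phi0 (shift p (hf (2 * k + 1)) * ci k).
Proof. by apply: transport2 => // x; apply: cI0. Qed.
Lemma TI1 k p : I1 k (phi1 p) = phi1 (shift p (hf (2 * k + 1)) * ei k).
Proof. by apply: transport2 => // x; apply: cI1. Qed.

Lemma inj0 p q : phi0 p = phi0 q -> p = q.
Proof. by move=> e; rewrite -(K0 p) e K0. Qed.
Lemma inj1 p q : phi1 p = phi1 q -> p = q.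
Proof. by move=> e; rewrite -(K1 p) e K1. Qed.

Lemma vE : v = phi0 1. Proof. by rewrite pa1. Qed.
Lemma wE : w = phi1 1. Proof. by rewrite pa1. Qed.

Lemma GGv j l n : j + l = 2 * n ->
  shift (g l) (hf j) * h j + shift (g j) (hf l) * h l = ((-1) ^ j * 2) *: a n.
Proof.
have [_ [_ [_ [_ [_ [RGG _]]]]]] := trels0 V.
move=> e; apply: inj0; rewrite paD paZ -!TG10 !K1' K0'.
exact: RGG.
Qed.
Lemma GGvo j l k : j + l = 2 * k + 1 ->
  shift (g l) (hf j) * h j + shift (g j) (hf l) * h l
   = ((-1) ^ (j + 1) * ((j - l)%:~R / 2)) *: ci k.
Proof.
have [_ [_ [_ [_ [_ [_ RGG]]]]]] := trels0 V.
move=> e; apply: inj0; rewrite paD paZ -!TG10 !K1' K0'.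
exact: RGG.
Qed.
Lemma GGw j l n : j + l = 2 * n ->
  shift (h l) (hf j) * g j + shift (h j) (hf l) * g l = ((-1) ^ j * 2) *: b n.
Proof.
have [_ [_ [_ [_ [_ [RGG _]]]]]] := trels1 V.
move=> e; apply: inj1; rewrite paD paZ -!TG01 !K0' K1'.
exact: RGG.
Qed.
Lemma GGwo j l k : j + l = 2 * k + 1 ->
  shift (h l) (hf j) * g j + shift (h j) (hf l) * g l
   = ((-1) ^ (j + 1) * ((j - l)%:~R / 2)) *: ei k.
Proof.
have [_ [_ [_ [_ [_ [_ RGG]]]]]] := trels1 V.
move=> e; apply: inj1; rewrite paD paZ -!TG01 !K0' K1'.
exact: RGG.
Qed.
Lemma IGv k j :
  shift (g j) (hf (2 * k + 1)) * ei k - shift (ci k) (hf j) * g j = g (2 * k + 1 + j).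
Proof.
have [_ [_ [_ [_ [RIG _]]]]] := trels0 V.
apply: inj1; rewrite paB -TI1 -TG01 !K1' K0'.
exact: RIG.
Qed.
Lemma IGw k j :
  shift (h j) (hf (2 * k + 1)) * ci k - shift (ei k) (hf j) * h j = h (2 * k + 1 + j).
Proof.
have [_ [_ [_ [_ [RIG _]]]]] := trels1 V.
apply: inj0; rewrite paB -TI0 -TG10 !K0' K1'.
exact: RIG.
Qed.

Lemma g0E : g 0 = 1.
Proof. by rewrite /g {1}wE K1. Qed.
Lemma a0E : a 0 = 'X.
Proof. by rewrite /a -(paX (L0 0) v) K0. Qed.
Lemma b0E : b 0 = 'X.
Proof. by rewrite /b -(paX (L1 0) w) K1. Qed.
Lemma h0E : h 0 = 'X.
Proof.
have := GGv (j := 0) (l := 0) (n := 0) (erefl _).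
rewrite g0E half0 shift0 mul1r a0E expr0z mul1r -mulr2n -scaler_nat => /scalerI.
by apply; rewrite pnatr_eq0.
Qed.

Lemma Hvm j : shift (g (-j)) (hf j) * h j + shift (g j) (hf (-j)) * h (-j)
   = ((-1 : C) ^ j * 2) *: 'X.
Proof. by rewrite -a0E; apply: GGv; rewrite addrN mulr0. Qed.
Lemma Hwm j : shift (h (-j)) (hf j) * g j + shift (h j) (hf (-j)) * g (-j)
   = ((-1 : C) ^ j * 2) *: 'X.
Proof. by rewrite -b0E; apply: GGw; rewrite addrN mulr0. Qed.
Lemma Hjv j : 2 *: (shift (g j) (hf j) * h j) = (-1) ^ j *: (g (2 * j) * 'X + h (2 * j)).
Proof.
have e1 := GGv (j := j) (l := j) (n := j) ltac:(ring).
have e2 := GGv (j := 0) (l := 2 * j) (n := j) ltac:(by rewrite add0r).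
move: e2; rewrite half0 shift0 h0E g0E shift1 mul1r expr0z mul1r => ->.
by rewrite scalerA -e1 scaler_nat mulr2n.
Qed.
Lemma Hjw j : 2 *: (shift (h j) (hf j) * g j)
   = (-1) ^ j *: (h (2 * j) + shift 'X (hf (2 * j)) * g (2 * j)).
Proof.
have e1 := GGw (j := j) (l := j) (n := j) ltac:(ring).
have e2 := GGw (j := 0) (l := 2 * j) (n := j) ltac:(by rewrite add0r).
move: e2; rewrite half0 shift0 h0E g0E mulr1 expr0z mul1r => ->.
by rewrite scalerA -e1 scaler_nat mulr2n.
Qed.
Lemma H2j k : let j := 1 + 2 * k in
  shift (g (-j)) (hf (2 * j)) * h (2 * j) + shift (g (2 * j)) (hf (-j)) * h (-j)
   = (-3) *: (g j * 'X + h j).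
Proof.
move=> j.
have e1 := GGvo (j := 2 * j) (l := - j) (k := k) ltac:(rewrite /j; ring).
have e2 := GGvo (j := 0) (l := j) (k := k) ltac:(rewrite /j; ring).
move: e2; rewrite half0 shift0 h0E g0E shift1 mul1r [_ * 'X]mulrC => ->.
rewrite e1 scalerA; congr (_ *: _).
rewrite add0r expr1z sub0r opprK.
rewrite -[2 * j + 1]addrC (epsS C) eps2 /j !intrD !intrM !intrN.
by field.
Qed.
Lemma HIv j : shift (g j) (hf 1) * ei 0 - shift (ci 0) (hf j) * g j = g (1 + j).
Proof. by have := IGv 0 j; rewrite mulr0 !add0r. Qed.
Lemma HIw j : shift (h j) (hf 1) * ci 0 - shift (ei 0) (hf j) * h j = h (1 + j).
Proof. by have := IGw 0 j; rewrite mulr0 !add0r. Qed.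
Lemma Hc : hf 1 *: ci 0 = g 1 * 'X + h 1.
Proof.
have := GGvo (j := 0) (l := 1) (k := 0) ltac:(by rewrite mulr0 !add0r).
rewrite half0 shift0 h0E g0E shift1 mul1r [_ * 'X]mulrC => ->.
congr (_ *: _); rewrite /Defs.half add0r expr1z sub0r intrN; by field.
Qed.
Lemma He : hf 1 *: ei 0 = h 1 + shift 'X (hf 1) * g 1.
Proof.
have := GGwo (j := 0) (l := 1) (k := 0) ltac:(by rewrite mulr0 !add0r).
rewrite half0 shift0 h0E g0E mulr1 => ->.
congr (_ *: _); rewrite /Defs.half add0r expr1z sub0r intrN; by field.
Qed.

Lemma mod_main : exists (gam al : C), gam != 0 /\ forall j,
  g j = (gam ^ j)%:P /\ h j = ((-1) ^ j * gam ^ j) *: ('X + (j%:~R * al)%:P).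
Proof.
apply: (poly_main (c0 := ci 0) (e0 := ei 0)).
- exact: g0E.
- exact: h0E.
- exact: Hvm.
- exact: Hwm.
- exact: Hjv.
- exact: Hjw.
- exact: H2j.
- exact: HIv.
- exact: HIw.
- exact: Hc.
- exact: He.
Qed.

Section Formulas.
Variables (gam al : C).
Hypothesis HG : forall j,
  g j = (gam ^ j)%:P /\ h j = ((-1) ^ j * gam ^ j) *: ('X + (j%:~R * al)%:P).

Lemma aE m : a m = (gam ^ (2 * m)) *: ('X + (m%:~R * al)%:P).
Proof.
have e := GGv (j := 0) (l := 2 * m) (n := m) ltac:(by rewrite add0r).
move: e; rewrite half0 shift0 h0E g0E shift1 mul1r expr0z mul1r.
have [-> ->] := HG (2 * m); rewrite eps2 mul1r => e.
apply: (@scalerI _ _ 2); first by rewrite pnatr_eq0.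
rewrite -e -!mul_polyC; ring.
Qed.

Lemma bE m : b m = (gam ^ (2 * m)) *: ('X + (m%:~R * (al + 2^-1))%:P).
Proof.
have e := GGw (j := 0) (l := 2 * m) (n := m) ltac:(by rewrite add0r).
move: e; rewrite half0 shift0 h0E g0E mulr1 expr0z mul1r shiftX half2.
have [-> ->] := HG (2 * m); rewrite eps2 mul1r => e.
apply: (@scalerI _ _ 2); first by rewrite pnatr_eq0.
rewrite -e /Defs.half !QX !QC ?(shiftQ0, QM0, QZ, QD, QB, addr0, add0r, mulr0, mul0r).
by congr Q; field.
Qed.

Lemma epso k : (-1 : C) ^ (2 * k + 1) = -1.
Proof. by rewrite addrC eps_odd. Qed.

Lemma ciE k : ci k = (-2 * gam ^ (2 * k + 1) * al)%:P.
Proof.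
have e := GGvo (j := 0) (l := 2 * k + 1) (k := k) ltac:(by rewrite add0r).
move: e; rewrite half0 shift0 h0E g0E shift1 mul1r.
have [-> ->] := HG (2 * k + 1); rewrite epso add0r expr1z sub0r => e.
have o0 : (2 * k + 1)%:~R != 0 :> C by rewrite intr_eq0; lia.
apply: (@scalerI _ _ (-1 * ((- (2 * k + 1))%:~R / 2))).
  by rewrite mulN1r oppr_eq0 mulf_neq0 // ?intrN ?oppr_eq0 // invr_eq0 pnatr_eq0.
rewrite -e /Defs.half !QX !QC ?(shiftQ0, QM0, QZ, QD, QB, addr0, add0r, mulr0, mul0r).
by congr Q; field.
Qed.

Lemma eiE k : ei k = (gam ^ (2 * k + 1) * (1 - 2 * al))%:P.
Proof.
have e := GGwo (j := 0) (l := 2 * k + 1) (k := k) ltac:(by rewrite add0r).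
move: e; rewrite half0 shift0 h0E g0E mulr1 shiftX.
have [-> ->] := HG (2 * k + 1); rewrite epso add0r expr1z sub0r => e.
have o0 : (2 * k + 1)%:~R != 0 :> C by rewrite intr_eq0; lia.
apply: (@scalerI _ _ (-1 * ((- (2 * k + 1))%:~R / 2))).
  by rewrite mulN1r oppr_eq0 mulf_neq0 // ?intrN ?oppr_eq0 // invr_eq0 pnatr_eq0.
rewrite -e /Defs.half !QX !QC ?(shiftQ0, QM0, QZ, QD, QB, addr0, add0r, mulr0, mul0r).
by congr Q; field.
Qed.

End Formulas.

Lemma iso_main gam al t lam :
  (forall j, g j = (gam ^ j)%:P /\ h j = ((-1) ^ j * gam ^ j) *: ('X + (j%:~R * al)%:P)) ->
  (t = 1 \/ t = -1) -> gam = t * sqrtC lam -> iso_Mt V t lam al.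
Proof.
move=> HG ht hg.
set s := sqrtC lam.
have t2 k : t ^ (2 * k) = 1 by case: ht => ->; [rewrite exp1rz | rewrite eps2].
have gp k : gam ^ k = t ^ k * s ^ k by rewrite hg expfzMl.
have g2 k : gam ^ (2 * k) = s ^ (2 * k) by rewrite gp t2 mul1r.
have mt k : (- t) ^ k = (-1) ^ k * t ^ k by rewrite -mulN1r expfzMl.
pose f0 := linv (f := pa_fun (L0 0) v) (g := psi0) K0 K0'.
pose f1 := linv (f := pa_fun (L1 0) w) (g := psi1) K1 K1'.
exists f0, f1; split.
- by exists (pa_fun (L0 0) v) => x; [apply: K0' | apply: K0].
- by exists (pa_fun (L1 0) w) => x; [apply: K1' | apply: K1].
- move=> m x; rewrite -[x]K0' /= /linv /pa_fun TL0 !K0 (aE HG) /ML0 /lpow -/s -g2.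
  by rewrite -!mul_polyC; ring.
- move=> m x; rewrite -[x]K1' /= /linv /pa_fun TL1 !K1 (bE HG) /ML1 /lpow -/s -g2.
  by rewrite -!mul_polyC; ring.
split.
- move=> k x; rewrite -[x]K0' /= /linv /pa_fun TI0 !K0 (ciE HG) /MI0 /lpow -/s gp.
  by rewrite -!mul_polyC; ring.
- move=> k x; rewrite -[x]K1' /= /linv /pa_fun TI1 !K1 (eiE HG) /MI1 /lpow -/s gp.
  by rewrite -!mul_polyC; ring.
- move=> j x; rewrite -[x]K0' /= /linv /pa_fun TG01 !K1 !K0.
  have [-> _] := HG j; rewrite /MG01 /lpow -/s gp.
  by rewrite -!mul_polyC; ring.
- move=> j x; rewrite -[x]K1' /= /linv /pa_fun TG10 !K0 !K1.
  have [_ ->] := HG j; rewrite /MG10 /lpow -/s gp mt.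
  by rewrite -!mul_polyC; ring.
Qed.

End Mod.

Lemma even_case (C : numClosedFieldType) (V : tmodule C) : Uh_free1_even V ->
  exists lam al : C, lam != 0 /\ (iso_Mt V 1 lam al \/ iso_Mt V (-1) lam al).
Proof.
case=> v [[psi0 K0 K0'] [psi1 K1 K1']].
have K1a p : psi1 (polyact (tL1 V 0) p (tG01 V 0 v)) = p by rewrite -phi1E K1.
have K1b y : polyact (tL1 V 0) (psi1 y) (tG01 V 0 v) = y by rewrite -phi1E K1'.
have [gam [al [g0 HG]]] := mod_main K0 K0' K1a K1b.
exists (gam ^+ 2), al; split; first by rewrite expf_neq0.
set s := sqrtC (gam ^+ 2).
have : (s - gam) * (s + gam) == 0.
  by rewrite -subr_sqr sqrtCK subrr.
rewrite mulf_eq0 => /orP [/eqP e|/eqP e].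
  left; apply: (iso_main K0 K0' K1a K1b HG).
  - by left.
  - by rewrite mul1r -/s; apply/eqP; rewrite eq_sym -subr_eq0 e.
right; apply: (iso_main K0 K0' K1a K1b HG).
- by right.
- by rewrite -/s mulN1r; apply/eqP; rewrite -addr_eq0 addrC e.
Qed.

Unset Implicit Arguments.
Theorem theorem3p3 (R : realType) (V : tmodule R[i]) :
  Uh_free1 V ->
  exists lam al : R[i], lam != 0 /\
    [\/ iso_Mt V 1 lam al, iso_Mt V (-1) lam al,
        iso_Mt (Pi V) 1 lam al | iso_Mt (Pi V) (-1) lam al].
Proof.
case=> H; have [lam [al [l0 [I|I]]]] := even_case H; exists lam, al; split => //.
- exact: Or41.
- exact: Or42.
- exact: Or43.
- exact: Or44.
Qed.
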